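(* Let $\mathbb{K}\in\{\mathbb{R},\mathbb{C}\}$ and let $\mathcal{X}$ be a topological $\mathbb{K}$-vector space whose topological dual $\mathcal{X}^{\ast}$ separates the points of $\mathcal{X}$. Let $\mathcal{V}_1,\mathcal{V}_2\in\mathcal{C}$ be cylinders such that $\mathbf{B}_{\mathcal{V}_1}(\mathcal{X}^{\ast})\subsetneq\mathbf{B}_{\mathcal{V}_2}(\mathcal{X}^{\ast})$. Then for every $F_1\in\mathbf{B}_{\mathcal{V}_1}(\mathcal{X}^{\ast})$ and every $F_2\in\mathbf{B}_{\mathcal{V}_2}(\mathcal{X}^{\ast})\setminus\mathbf{B}_{\mathcal{V}_1}(\mathcal{X}^{\ast})$ there is $A\in\mathcal{X}$ with $d_H^{(A)}(F_1,F_2)=\infty$. In particular, for every $B\in\mathbf{B}(\mathcal{X}^{\ast})$ and every $F\in\mathbf{F}(\mathcal{X}^{\ast})\setminus\mathbf{B}(\mathcal{X}^{\ast})$ there is $A\in\mathcal{X}$ with $d_H^{(A)}(B,F)=\infty$.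
   Context: Topological vector spaces are Hausdorff (Rudin's definition). $\mathcal{X}^{\ast}$ carries the weak* topology $\sigma(\mathcal{X}^{\ast},\mathcal{X})$. $\mathbf{F}(\mathcal{X}^{\ast})$ is the set of nonempty weak*-closed subsets of $\mathcal{X}^{\ast}$. For $A\in\mathcal{X}$ and $F,\tilde F\in\mathbf{F}(\mathcal{X}^{\ast})$, $d_H^{(A)}(F,\tilde F)=\max\{\sup_{\sigma\in F}\inf_{\tilde\sigma\in\tilde F}|(\sigma-\tilde\sigma)(A)|,\ \sup_{\tilde\sigma\in\tilde F}\inf_{\sigma\in F}|(\sigma-\tilde\sigma)(A)|\}\in[0,\infty]$. For $A\in\mathcal{X}$ let $\mathcal{V}_A=\{\sigma\in\mathcal{X}^{\ast}:|\sigma(A)|<1\}$; the set of cylinders is $\mathcal{C}=\{\bigcap_{j=1}^n\mathcal{V}_{A_j}: n\in\mathbb{N},\ A_1,\dots,A_n\in\mathcal{X}\}$. For $\mathcal{V}\in\mathcal{C}$, $\mathbf{B}_{\mathcal{V}}(\mathcal{X}^{\ast})=\{B\in\mathbf{F}(\mathcal{X}^{\ast}): B\subseteq\lambda\mathcal{V}\text{ for some }\lambda>0\}$, and $\mathbf{B}(\mathcal{X}^{\ast})=\bigcap_{\mathcal{V}\in\mathcal{C}}\mathbf{B}_{\mathcal{V}}(\mathcal{X}^{\ast})$ (the nonempty bounded weak*-closed subsets). *)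

(* Defs.v *)
From HB Require Import structures.
From mathcomp Require Import all_boot all_order all_algebra.
From mathcomp Require Import all_classical all_reals all_analysis.
From mathcomp Require Export complex.
Export numFieldTopology.Exports.

Set Implicit Arguments.
Unset Strict Implicit.
Unset Printing Implicit Defensive.

Import Order.TTheory GRing.Theory Num.Theory.
Local Open Scope classical_set_scope.
Local Open Scope ring_scope.

Section Dual.
Variables (K : numFieldType) (X : topologicalLmodType K).

Definition dual : set (X -> K^o) :=
  [set f | (forall (a : K) (x y : X), f (a *: x + y) = a * f x + f y)
           /\ continuous f].

(* Weak*-closed subsets of Xdual: closed for the subspace topology that Xdual
   inherits from the topology of pointwise convergence on X -> K
   (i.e. sigma(Xdual, X)). *)
Definition weak_star_closed (F : set (X -> K^o)) : Prop :=
  F `<=` dual /\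
  exists C : set {ptws X -> K^o}, closed C /\ F = C `&` dual.

Definition FX : set (set (X -> K^o)) :=
  [set F | F !=set0 /\ weak_star_closed F].

Definition cylV (A : X) : set (X -> K^o) :=
  [set s | dual s /\ `|s A| < 1].

Definition cylinders : set (set (X -> K^o)) :=
  [set V | exists (n : nat) (A : 'I_n.+1 -> X),
             V = \bigcap_(j in [set: 'I_n.+1]) cylV (A j)].

Definition scale_set (l : K) (V : set (X -> K^o)) : set (X -> K^o) :=
  [set (fun x => l * s x) | s in V].

Definition BV (V : set (X -> K^o)) : set (set (X -> K^o)) :=
  [set B | FX B /\ exists l : K, 0 < l /\ B `<=` scale_set l V].

Definition BX : set (set (X -> K^o)) :=
  [set B | forall V, cylinders V -> BV V B].

(* d_H^{(A)}(F, G) in [0, +oo], where nrm : K -> R is the modulus of K. *)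
Definition dH (R : realType) (nrm : K -> R) (A : X)
    (F G : set (X -> K^o)) : \bar R :=
  maxe
    (ereal_sup [set ereal_inf [set (nrm (s A - t A))%:E | t in G] | s in F])
    (ereal_sup [set ereal_inf [set (nrm (s A - t A))%:E | s in F] | t in G]).

Definition dual_separates : Prop :=
  forall x y : X, x <> y -> exists s, dual s /\ s x <> s y.

End Dual.

(* Main.v *)
Require Import Defs.
From HB Require Import structures.
From mathcomp Require Import all_boot all_order all_algebra.
From mathcomp Require Import all_classical all_reals all_analysis.
From mathcomp Require Import complex.
From mathcomp Require Import lra.
Import numFieldTopology.Exports.
Import Order.TTheory GRing.Theory Num.Theory.
Local Open Scope classical_set_scope.
Local Open Scope ring_scope.

Lemma key_gen (K : numFieldType) (X : topologicalLmodType K) (R : realType)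
  (nrm : K -> R)
  (Htri : forall a b : K, nrm a - nrm b <= nrm (a - b))
  (Hsym : forall z : K, nrm (- z) = nrm z)
  (Hmono : forall z w : K, `|z| <= `|w| -> nrm z <= nrm w)
  (Hemb : forall M : R, exists l : K, 0 < l /\ M <= nrm l)
  (V : set (X -> K^o)) (F1 F2 : set (X -> K^o)) :
  cylinders V -> BV V F1 -> FX F2 -> ~ BV V F2 ->
  exists A : X, dH nrm A F1 F2 = +oo%E.
Proof.
move=> [n [Aj ->]] [[[t1 F1t1] _] [l1 [l1pos F1sub]]] FX2 nBV.
have [j Hj] : exists j, forall l : K, 0 < l -> exists2 s, F2 s & l <= `|s (Aj j)|.
  apply: contrapT => nj.
  have Hb : forall j, exists l : K, 0 < l /\ (forall s, F2 s -> `|s (Aj j)| < l).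
    move=> j; apply: contrapT => Hn; apply: nj; exists j => l l0.
    apply: contrapT => Hs; apply: Hn; exists l; split=> // s F2s.
    rewrite real_ltNge ?normr_real ?gtr0_real //; apply/negP => Hle; apply: Hs; by exists s.
  have [f Hf] := choice Hb.
  set L := \sum_(i < n.+1) f i + 1.
  have fL : forall i, f i < L.
    move=> i; rewrite /L (bigD1 i) //= -addrA ltrDl.
    apply: ltr_wpDl; last exact: ltr01.
    by apply: sumr_ge0 => k _; apply: ltW; case: (Hf k).
  have L0 : 0 < L by apply: le_lt_trans (fL ord0); apply: ltW; case: (Hf ord0).
  apply: nBV; split => //; exists L; split => // s F2s.
  have ds : dual s by case: FX2 => _ [+ _]; apply.
  exists (fun x => L^-1 * s x); last first.
    by apply: funext => x /=; rewrite mulrA divff ?mul1r // gt_eqF.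
  move=> i _; split.
    case: ds => lin cont; split.
      by move=> a x y; rewrite lin mulrDr mulrCA.
    move=> x; apply: (@continuousM K X (fun=> L^-1) s x) => //.
      exact: cst_continuous.
    exact: cont.
  change (`|(L^-1 * s (Aj i) : K)| < 1).
  rewrite normrM normfV (gtr0_norm L0) mulrC ltr_pdivrMr // mul1r.
  case: (Hf i) => _ /(_ s F2s) H; exact: lt_trans H (fL i).
pose A := Aj j; exists A.
have bnd : forall t, F1 t -> nrm (t A) <= nrm l1.
  move=> t /F1sub [u Vu <-] /=; apply: Hmono.
  change (`|(l1 * u A : K)| <= `|l1|).
  rewrite normrM (gtr0_norm l1pos) ler_piMr ?ltW //; by case: (Vu j I).
rewrite /dH.
suff -> : ereal_sup [set ereal_inf [set (nrm (s A - t A))%:E | s in F1] | t in F2] = +oo%E.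
  by rewrite maxey.
have Hall : forall M : R, (M%:E <= ereal_sup [set ereal_inf [set (nrm (s A - t A))%:E | s in F1] | t in F2])%E.
  move=> M; have [l [l0 Ml]] := Hemb (M + nrm l1).
  have [s F2s Hs] := Hj l l0.
  apply: (@le_trans _ _ (ereal_inf [set (nrm (t A - s A))%:E | t in F1])); last first.
    by apply: ereal_sup_ubound; exists s.
  apply: le_ereal_inf_tmp => _ [t F1t <-]; rewrite lee_fin.
  have := Htri (s A) (t A); have := bnd t F1t; have := Hmono l (s A).
  rewrite (gtr0_norm l0) => /(_ Hs) Hls.
  rewrite -(Hsym (t A - s A)) opprB => Ht Hb; lra.
move: Hall; case: (ereal_sup _) => [r H||H] //.
- have := H (r + 1); rewrite lee_fin => Hr; by move: Hr; rewrite gerDl ler10.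
- by have := H 0.
Qed.
Theorem proposition3p2 :
  (forall (R : realType) (X : topologicalLmodType R),
     hausdorff_space X -> dual_separates X ->
     (forall V1 V2 : set (X -> R^o),
        cylinders V1 -> cylinders V2 ->
        BV V1 `<` BV V2 ->
        forall F1 F2 : set (X -> R^o),
          BV V1 F1 -> BV V2 F2 -> ~ BV V1 F2 ->
          exists A : X, dH (@Num.norm R R) A F1 F2 = +oo%E) /\
     (forall B F : set (X -> R^o),
        BX B -> FX F -> ~ BX F ->
        exists A : X, dH (@Num.norm R R) A B F = +oo%E)) /\
  (forall (R : realType) (X : topologicalLmodType R[i]),
     hausdorff_space X -> dual_separates X ->
     (forall V1 V2 : set (X -> R[i]^o),
        cylinders V1 -> cylinders V2 ->
        BV V1 `<` BV V2 ->
        forall F1 F2 : set (X -> R[i]^o),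
          BV V1 F1 -> BV V2 F2 -> ~ BV V1 F2 ->
          exists A : X, dH (@ComplexField.Normc.normc R) A F1 F2 = +oo%E) /\
     (forall B F : set (X -> R[i]^o),
        BX B -> FX F -> ~ BX F ->
        exists A : X, dH (@ComplexField.Normc.normc R) A B F = +oo%E)).
Proof.
have part2 : forall (K : numFieldType) (X : topologicalLmodType K) (R : realType)
  (nrm : K -> R),
  (forall a b : K, nrm a - nrm b <= nrm (a - b)) ->
  (forall z : K, nrm (- z) = nrm z) ->
  (forall z w : K, `|z| <= `|w| -> nrm z <= nrm w) ->
  (forall M : R, exists l : K, 0 < l /\ M <= nrm l) ->
  (forall V1 V2 : set (X -> K^o),
        cylinders V1 -> cylinders V2 ->
        BV V1 `<` BV V2 ->
        forall F1 F2 : set (X -> K^o),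
          BV V1 F1 -> BV V2 F2 -> ~ BV V1 F2 ->
          exists A : X, dH nrm A F1 F2 = +oo%E) /\
     (forall B F : set (X -> K^o),
        BX B -> FX F -> ~ BX F ->
        exists A : X, dH nrm A B F = +oo%E).
  move=> K X R nrm H1 H2 H3 H4; split.
    move=> V1 V2 c1 _ _ F1 F2 B1 [B2 _] nB.
    exact: (@key_gen _ _ _ _ H1 H2 H3 H4 _ _ _ c1 B1 B2 nB).
  move=> B F BB FF nB.
  have [V [cV nV]] : exists V, cylinders V /\ ~ BV V F.
    apply: contrapT => Hn; apply: nB => V cV; apply: contrapT => nV.
    by apply: Hn; exists V.
  exact: (@key_gen _ _ _ _ H1 H2 H3 H4 _ _ _ cV (BB V cV) FF nV).
split.
  move=> R X _ _; apply: part2.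
  - exact: lerB_dist.
  - exact: normrN.
  - by [].
  - move=> M; exists (`|M| + 1); split; first by rewrite ltr_pwDr // normr_ge0.
    rewrite ger0_norm ?addr_ge0 // (le_trans (ler_norm M)) // lerDl //.
move=> R X _ _; apply: part2.
- move=> a b; have := @le_normcD R (a - b) b; rewrite subrK => H.
  by rewrite lerBlDr.
- exact: normcN.
- by move=> z w; rewrite lecR.
- move=> M; exists ((`|M| + 1)%:C)%C; split.
    by rewrite ltcR ltr_pwDr // normr_ge0.
  rewrite /ComplexField.Normc.normc /= expr0n addr0 sqrtr_sqr.
  rewrite ger0_norm ?addr_ge0 // (le_trans (ler_norm M)) // lerDl //.
Qed.
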